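(* Let $X$ be a set, $B=(B,+,0)$ a unitary magma, $(A,k,q,s,p)$ a retraction point from $X$ to $B$, and $\varphi(x,b,x',b')=q\big((k(x)+s(b))+(k(x')+s(b'))\big)$. Write $0$ also for $q(0)\in X$ and set $x+x'=\varphi(x,0,x',0)$, $\xi(b,x')=\varphi(0,b,x',0)$, $\rho_{b'}(x)=\varphi(x,0,0,b')$. 1. If $A=(A,+,0)$ is a monoid (i.e. $+$ is associative), then: (a) $(X,+,q(0))$ and $(B,+,0)$ are monoids; (b) $A$ is in bijection with $\{(x,b)\in X\times B\mid \rho_b(x)=x\}$ via the mutually inverse assignments $a\mapsto(q(a),p(a))$ and $(x,b)\mapsto k(x)+s(b)$; (c) $\varphi(x,b,x',b')=\rho_{b+b'}(x+\xi(b,x'))$ for all $x,x'\in X$, $b,b'\in B$; (d) every retraction point of the form $(B,k',q',s',p')$ (from any set $Y$ to any unitary magma $C$) is composable with $(A,k,q,s,p)$. 2. If $A=(A,+,0)$ is a left loop, then: (a) $k(q(a))=a-s(p(a))$ for all $a\in A$; (b) $k(\varphi(x,b,x',b'))=\big((k(x)+s(b))+(k(x')+s(b'))\big)-s(b+b')$ for all $x,x'\in X$, $b,b'\in B$; (c) $\rho_b(x)=x$ for all $x\in X$, $b\in B$; (d) $k(\xi(b,x'))=(s(b)+k(x'))-s(b)$ for all $x'\in X$, $b\in B$; (e) $A$ is in bijection with $X\times B$ via the mutually inverse assignments $a\mapsto(q(a),p(a))$ and $(x,b)\mapsto k(x)+s(b)$.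
   Context: A unitary magma is a set with a binary operation $+$ and an element $0$ with $b+0=b=0+b$ for all $b$; morphisms preserve $+$ and $0$. Given a set $X$ and a unitary magma $B$, a retraction point from $X$ to $B$ is a tuple $(A,k,q,s,p)$ where $A=(A,+,0)$ is a unitary magma, $k\colon X\to A$ and $q\colon A\to X$ are maps, $s\colon B\to A$ and $p\colon A\to B$ are morphisms of unitary magmas, and $p(s(b))=b$, $q(k(x))=x$, $p(k(x))=0$, $q(s(b))=q(0)$, and $k(q(a))+s(p(a))=a$ for all $x\in X$, $b\in B$, $a\in A$. Composability: for a retraction point $(A,k,q,s,p)$ from $X$ to $B$ and a retraction point $(B,k',q',s',p')$ from a set $Y$ to a unitary magma $C$, let $A\times_B Y=\{(a,y)\in A\times Y\mid p(a)=k'(y)\}$ with first projection $\pi_1$, and $q''\colon A\to A\times_B Y$, $q''(a)=\big(k(q(a))+s(k'(q'(p(a)))),\ q'(p(a))\big)$; $(B,k',q',s',p')$ is composable with $(A,k,q,s,p)$ if $(A,\pi_1,q'',ss',p'p)$ is a retraction point from the set $A\times_B Y$ to $C$. A left loop is a unitary magma $(A,+,0)$ such that for all $a,c\in A$ there is a unique $u\in A$ with $a=u+c$; this $u$ is denoted $a-c$. *)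

(* Defs.v *)
From Stdlib Require Import ClassicalEpsilon.
Set Implicit Arguments.

Record UMagma := {
  car :> Type;
  add : car -> car -> car;
  zero : car;
  add0r : forall b, add zero b = b;
  addr0 : forall b, add b zero = b }.
Arguments add {u} _ _.
Arguments zero {u}.

Definition um_morphism {A B : UMagma} (f : A -> B) : Prop :=
  (forall a a', f (add a a') = add (f a) (f a')) /\ f zero = zero.

Definition retraction_point {X : Type} {B A : UMagma}
  (k : X -> A) (q : A -> X) (s : B -> A) (p : A -> B) : Prop :=
  um_morphism s /\ um_morphism p /\
  (forall b, p (s b) = b) /\ (forall x, q (k x) = x) /\
  (forall x, p (k x) = zero) /\ (forall b, q (s b) = q zero) /\
  (forall a, add (k (q a)) (s (p a)) = a).

Definition fibre {A B : UMagma} {Y : Type} (p : A -> B) (k' : Y -> B) : Type :=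
  {ay : A * Y | p (fst ay) = k' (snd ay)}.

Lemma fib_cond {X : Type} {B A : UMagma} (k : X -> A) (q : A -> X) (s : B -> A)
  (p : A -> B) (H : retraction_point k q s p) :
  forall a b, p (add (k (q a)) (s b)) = b.
Proof.
  destruct H as [_ [[Hp _] [Hps [_ [Hpk _]]]]].
  intros a b. rewrite Hp, Hpk, Hps. apply add0r.
Qed.

Definition qpp {X : Type} {B A : UMagma} (k : X -> A) (q : A -> X) (s : B -> A)
  (p : A -> B) (H : retraction_point k q s p) (Y : Type) (k' : Y -> B) (q' : B -> Y)
  : A -> fibre p k' :=
  fun a => exist _ (add (k (q a)) (s (k' (q' (p a)))), q' (p a))
                 (fib_cond H a (k' (q' (p a)))).

Definition composable {X : Type} {B A : UMagma} (k : X -> A) (q : A -> X) (s : B -> A)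
  (p : A -> B) (H : retraction_point k q s p)
  {Y : Type} {C : UMagma} (k' : Y -> B) (q' : B -> Y) (s' : C -> B) (p' : B -> C) : Prop :=
  retraction_point (fun z : fibre p k' => fst (proj1_sig z)) (qpp H k' q')
    (fun c => s (s' c)) (fun a => p' (p a)).

Definition phi {X : Type} {B A : UMagma} (k : X -> A) (q : A -> X) (s : B -> A)
  (x : X) (b : B) (x' : X) (b' : B) : X :=
  q (add (add (k x) (s b)) (add (k x') (s b'))).
Definition xadd {X : Type} {B A : UMagma} (k : X -> A) (q : A -> X) (s : B -> A)
  (x x' : X) : X := phi k q s x zero x' zero.
Definition xi {X : Type} {B A : UMagma} (k : X -> A) (q : A -> X) (s : B -> A)
  (b : B) (x' : X) : X := phi k q s (q zero) b x' zero.
Definition rho {X : Type} {B A : UMagma} (k : X -> A) (q : A -> X) (s : B -> A)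
  (b' : B) (x : X) : X := phi k q s x zero (q zero) b'.

Definition is_monoid {T : Type} (op : T -> T -> T) (e : T) : Prop :=
  (forall a b c, op a (op b c) = op (op a b) c) /\
  (forall a, op e a = a) /\ (forall a, op a e = a).

(** Left loops and left division a - c (the unique u with a = u + c). *)
Definition left_loop (A : UMagma) : Prop :=
  forall a c : A, exists! u : A, a = add u c.
Definition lsub {A : UMagma} (L : left_loop A) (a c : A) : A :=
  proj1_sig (constructive_indefinite_description _ (L a c)).

Definition mutually_inverse {A T : Type} (P : T -> Prop) (f : A -> T) (g : T -> A) : Prop :=
  (forall a, P (f a)) /\ (forall a, g (f a) = a) /\ (forall t, P t -> f (g t) = t).

(* Main.v *)
Require Import Defs.
From Stdlib Require Import ProofIrrelevance ClassicalEpsilon.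

Lemma lsub_spec (A : UMagma) (L : left_loop A) (a c : A) : a = add (lsub L a c) c.
Proof. unfold lsub. exact (proj1 (proj2_sig (constructive_indefinite_description _ (L a c)))). Qed.

Lemma lsub_uniq (A : UMagma) (L : left_loop A) (a c u : A) : a = add u c -> u = lsub L a c.
Proof. intros E. unfold lsub. symmetry.
  exact (proj2 (proj2_sig (constructive_indefinite_description _ (L a c))) u E). Qed.

Theorem proposition6p2 (X : Type) (B A : UMagma)
  (k : X -> A) (q : A -> X) (s : B -> A) (p : A -> B)
  (H : retraction_point k q s p) :
  ( (forall a a' a'' : A, add a (add a' a'') = add (add a a') a'') ->
    (is_monoid (xadd k q s) (q zero) /\ is_monoid (@add B) zero) /\
    mutually_inverse (fun xb : X * B => rho k q s (snd xb) (fst xb) = fst xb)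
      (fun a : A => (q a, p a)) (fun xb : X * B => add (k (fst xb)) (s (snd xb))) /\
    (forall (x : X) (b : B) (x' : X) (b' : B),
       phi k q s x b x' b' = rho k q s (add b b') (xadd k q s x (xi k q s b x'))) /\
    (forall (Y : Type) (C : UMagma) (k' : Y -> B) (q' : B -> Y) (s' : C -> B) (p' : B -> C),
       retraction_point k' q' s' p' -> composable H k' q' s' p') )
  /\
  ( forall L : left_loop A,
    (forall a : A, k (q a) = lsub L a (s (p a))) /\
    (forall (x : X) (b : B) (x' : X) (b' : B),
       k (phi k q s x b x' b')
       = lsub L (add (add (k x) (s b)) (add (k x') (s b'))) (s (add b b'))) /\
    (forall (x : X) (b : B), rho k q s b x = x) /\
    (forall (x' : X) (b : B), k (xi k q s b x') = lsub L (add (s b) (k x')) (s b)) /\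
    mutually_inverse (fun _ : X * B => True)
      (fun a : A => (q a, p a)) (fun xb : X * B => add (k (fst xb)) (s (snd xb))) ).
Proof.
  pose proof H as H0.
  destruct H as [[Hsa Hs0] [[Hpa Hp0] [Hps [Hqk [Hpk [Hqs Hkq]]]]]].
  assert (Hkq0 : k (q zero) = zero).
  { pose proof (Hkq zero) as E. rewrite Hp0, Hs0, addr0 in E. exact E. }
  assert (Hker : forall a, p a = zero -> k (q a) = a).
  { intros a E. pose proof (Hkq a) as E2. rewrite E, Hs0, addr0 in E2. exact E2. }
  assert (Hpks : forall x b, p (add (k x) (s b)) = b).
  { intros x b. rewrite Hpa, Hpk, Hps. apply add0r. }
  assert (Hrho : forall b x, rho k q s b x = q (add (k x) (s b))).
  { intros b x. unfold rho, phi. rewrite Hs0, addr0, Hkq0, add0r. reflexivity. }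
  assert (Hxadd : forall x y, xadd k q s x y = q (add (k x) (k y))).
  { intros x y. unfold xadd, phi. rewrite Hs0, !addr0. reflexivity. }
  assert (Hxi : forall b x, xi k q s b x = q (add (s b) (k x))).
  { intros b x. unfold xi, phi. rewrite Hs0, addr0, Hkq0, add0r. reflexivity. }
  split.
  - intros Hass. split; [split|split; [|split]].
    + split; [|split].
      * intros x y z. rewrite !Hxadd.
        rewrite (Hker (add (k y) (k z))) by (rewrite Hpa, !Hpk; apply add0r).
        rewrite (Hker (add (k x) (k y))) by (rewrite Hpa, !Hpk; apply add0r).
        rewrite Hass. reflexivity.
      * intros x. rewrite Hxadd, Hkq0, add0r. apply Hqk.
      * intros x. rewrite Hxadd, Hkq0, addr0. apply Hqk.
    + split; [|split; [apply add0r|apply addr0]].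
      intros a b c. rewrite <- (Hps (add a (add b c))), <- (Hps (add (add a b) c)).
      rewrite !Hsa, Hass. reflexivity.
    + split; [|split].
      * intros a. simpl. rewrite Hrho. rewrite Hkq. reflexivity.
      * intros a. simpl. apply Hkq.
      * intros [x b] E. simpl in *. rewrite Hrho in E. rewrite E, Hpks. reflexivity.
    + intros x b x' b'. rewrite Hrho, Hxadd, Hxi. unfold phi.
      set (a := add (s b) (k x')).
      assert (Ea : a = add (k (q a)) (s b)).
      { pose proof (Hkq a) as E. unfold a at 2 in E. rewrite Hpa, Hpk, Hps, addr0 in E. symmetry; exact E. }
      rewrite (Hker (add (k x) (k (q a)))) by (rewrite Hpa, !Hpk; apply add0r).
      rewrite Hsa. rewrite <- !Hass. rewrite (Hass (k (q a))). rewrite <- Ea. unfold a.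
      rewrite !Hass. reflexivity.
    + intros Y C k' q' s' p' H'.
      destruct H' as [[Hsa' Hs0'] [[Hpa' Hp0'] [Hps' [Hqk' [Hpk' [Hqs' Hkq']]]]]].
      unfold composable. split; [|split; [|split; [|split; [|split; [|split]]]]].
      -- split; [intros; rewrite Hsa', Hsa; reflexivity | rewrite Hs0', Hs0; reflexivity].
      -- split; [intros; rewrite Hpa, Hpa'; reflexivity | rewrite Hp0, Hp0'; reflexivity].
      -- intros c. simpl. rewrite Hps, Hps'. reflexivity.
      -- intros [[a y] E]. simpl in E. unfold qpp. simpl.
         apply eq_sig_hprop; [intros; apply proof_irrelevance|]. simpl.
         rewrite E, Hqk'. rewrite <- E, Hkq. reflexivity.
      -- intros [[a y] E]. simpl in *. rewrite E. apply Hpk'.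
      -- intros c. unfold qpp.
         apply eq_sig_hprop; [intros; apply proof_irrelevance|]. simpl.
         rewrite Hqs, Hps, Hp0, Hqs'. reflexivity.
      -- intros a. unfold qpp. simpl. rewrite <- Hass, <- Hsa, Hkq'. apply Hkq.
  - intros L.
    assert (Ha : forall a, k (q a) = lsub L a (s (p a))).
    { intros a. apply lsub_uniq. symmetry. apply Hkq. }
    assert (Hc : forall x b, q (add (k x) (s b)) = x).
    { intros x b. set (a := add (k x) (s b)).
      assert (E1 : k (q a) = lsub L a (s b)).
      { rewrite Ha. unfold a at 2. rewrite Hpks. reflexivity. }
      assert (E2 : k x = lsub L a (s b)) by (apply lsub_uniq; reflexivity).
      rewrite <- (Hqk x), E2, <- E1, Hqk. reflexivity. }
    split; [exact Ha|split; [|split; [|split]]].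
    + intros x b x' b'. unfold phi. rewrite Ha. f_equal. f_equal.
      rewrite !Hpa, !Hpk, !Hps, !add0r. reflexivity.
    + intros x b. rewrite Hrho. apply Hc.
    + intros x' b. rewrite Hxi, Ha. f_equal. f_equal. rewrite Hpa, Hpk, Hps, addr0. reflexivity.
    + split; [|split].
      * intros; exact I.
      * intros a. simpl. apply Hkq.
      * intros [x b] _. simpl. rewrite Hc, Hpks. reflexivity.
Qed.
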